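(* Let $N\ge 1$ be an integer and $h,g>0$ real numbers. For $k\in\{0,1,\dots,N\}$ and $\Delta>0$ define $$R_k(\Delta):=\log\Big(1+(N-k)\frac{h^2}{1+\Delta}\Big)+\log(1+kg^2)-k\log\Big(\frac{1+\Delta}{\Delta}\Big)$$ (logarithms base $2$). Then for all $i,j\in\{0,\dots,N\}$ with $i\neq j$ there exists exactly one $\Delta=\Delta^*_{ij}>0$ with $R_i(\Delta)=R_j(\Delta)$.
   Context: $R_k(\Delta)$ is the quantize-map-and-forward rate of a cut containing $k$ relays in the symmetric $N$-relay diamond network (all source-relay magnitudes equal $h$, all relay-destination magnitudes equal $g$) when every relay uses Gaussian quantization distortion $\Delta$. *)

(* Defs.v *)
From Stdlib Require Import Reals.
Open Scope R_scope.

Definition log2 (x : R) : R := ln x / ln 2.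

(* QMF rate of a cut containing k relays in the symmetric N-relay diamond
   network with quantization distortion D (intended for k <= N, D > 0). *)
Definition Rk (N : nat) (h g : R) (k : nat) (D : R) : R :=
  log2 (1 + INR (N - k) * (h ^ 2 / (1 + D)))
  + log2 (1 + INR k * g ^ 2)
  - INR k * log2 ((1 + D) / D).

(* Main.v *)
Require Import Defs.
From Stdlib Require Import Reals Lra Lia.
From Coquelicot Require Import Coquelicot.
Open Scope R_scope.

Definition G (A B H c m D : R) : R :=
  ln (1 + A * (H / (1 + D))) - ln (1 + B * (H / (1 + D))) + c + m * ln ((1 + D) / D).

Lemma G_cont A B H c m a : 0 <= A -> 0 <= B -> 0 < H -> 0 < a ->
  continuity_pt (fun D => - G A B H c m D) a.
Proof.
  intros HA HB HH Ha.
  apply continuity_pt_filterlim. apply (@ex_derive_continuous R_AbsRing R_NormedModule (fun D => - G A B H c m D) a).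
  unfold G. auto_derive.
  assert (0 < H / (1 + a)) by (apply Rdiv_lt_0_compat; lra).
  repeat split; try nra; try lra.
  apply Rdiv_lt_0_compat; lra.
Qed.

Lemma G_decr A B H c m D1 D2 : 0 <= B -> B <= A -> 0 < H -> 0 < m ->
  0 < D1 -> D1 < D2 -> G A B H c m D2 < G A B H c m D1.
Proof.
  intros HB HAB HH Hm H1 H12. unfold G.
  set (x1 := H / (1 + D1)). set (x2 := H / (1 + D2)).
  assert (Hx2 : 0 < x2) by (unfold x2; apply Rdiv_lt_0_compat; lra).
  assert (Hx12 : x2 <= x1).
  { unfold x1, x2. unfold Rdiv. apply Rmult_le_compat_l; try lra.
    apply Rinv_le_contravar; lra. }
  assert (Hu : ln (1 + A * x2) + ln (1 + B * x1) <= ln (1 + A * x1) + ln (1 + B * x2)).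
  { assert (0 < x1) by lra. assert (0 <= A) by lra.
    assert (0 < 1 + A * x2) by nra. assert (0 < 1 + B * x1) by nra.
    assert (0 < 1 + A * x1) by nra. assert (0 < 1 + B * x2) by nra.
    rewrite <- !ln_mult by assumption. apply ln_le. nra.
    assert (0 <= (A - B) * (x1 - x2)) by (apply Rmult_le_pos; lra). nra. }
  assert (Hv : ln ((1 + D2) / D2) < ln ((1 + D1) / D1)).
  { apply ln_increasing. apply Rdiv_lt_0_compat; lra.
    unfold Rdiv. rewrite !Rmult_plus_distr_r, !Rinv_r by lra.
    rewrite !Rmult_1_l. apply Rplus_lt_compat_r. apply Rinv_lt_contravar; nra. }
  assert (m * ln ((1 + D2) / D2) < m * ln ((1 + D1) / D1)) by (apply Rmult_lt_compat_l; lra).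
  lra.
Qed.

Lemma G_unique A B H c m : 0 <= B -> B <= A -> 0 < H -> 1 <= m -> c < 0 ->
  exists! D, 0 < D /\ G A B H c m D = 0.
Proof.
  intros HB HAB HH Hm Hc.
  assert (HA : 0 <= A) by lra.
  set (x0 := exp c / 2).
  assert (Hx0 : 0 < x0) by (unfold x0; generalize (exp_pos c); lra).
  set (y0 := Rmax (x0 + 1) (2 * (A * H + m) / (- c))).
  assert (Hy0a : x0 + 1 <= y0) by apply Rmax_l.
  assert (Hy0b : 2 * (A * H + m) / (- c) <= y0) by apply Rmax_r.
  assert (Hy0 : 0 < y0) by lra.
  assert (Gx0 : 0 < G A B H c m x0).
  { unfold G.
    assert (Hx : 0 < H / (1 + x0)) by (apply Rdiv_lt_0_compat; lra).
    assert (ln (1 + B * (H / (1 + x0))) <= ln (1 + A * (H / (1 + x0)))).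
    { apply ln_le; nra. }
    assert (ln (/ x0) < ln ((1 + x0) / x0)).
    { apply ln_increasing. apply Rinv_0_lt_compat; lra.
      unfold Rdiv. rewrite Rmult_plus_distr_r, Rmult_1_l. 
      assert (0 < x0 * / x0) by (apply Rmult_lt_0_compat; try apply Rinv_0_lt_compat; lra). lra. }
    assert (ln (/ x0) = ln 2 - c).
    { unfold x0. rewrite Rinv_div. rewrite ln_div. rewrite ln_exp. lra. lra. apply exp_pos. }
    assert (0 < ln 2) by (generalize ln_lt_2; lra).
    assert (ln ((1 + x0) / x0) <= m * ln ((1 + x0) / x0)) by nra.
    lra. }
  assert (Gy0 : G A B H c m y0 < 0).
  { unfold G.
    assert (Hx : 0 < H / (1 + y0)) by (apply Rdiv_lt_0_compat; lra).
    assert (0 <= ln (1 + B * (H / (1 + y0)))).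
    { rewrite <- ln_1. apply ln_le; nra. }
    assert (ln (1 + A * (H / (1 + y0))) <= A * H / y0).
    { apply Rle_trans with (A * (H / (1 + y0))).
      - rewrite <- (ln_exp (A * (H / (1 + y0)))) at 2. apply ln_le. nra. apply exp_ineq1_le.
      - unfold Rdiv. rewrite <- Rmult_assoc. apply Rmult_le_compat_l. nra.
        apply Rinv_le_contravar; lra. }
    assert (ln ((1 + y0) / y0) <= 1 / y0).
    { replace ((1 + y0) / y0) with (1 + 1 / y0) by (field; lra).
      rewrite <- (ln_exp (1 / y0)) at 2. apply ln_le.
      assert (0 < 1 / y0) by (apply Rdiv_lt_0_compat; lra). lra. apply exp_ineq1_le. }
    assert (A * H / y0 + m * (1 / y0) <= - c / 2).
    { replace (A * H / y0 + m * (1 / y0)) with ((A * H + m) / y0) by (field; lra).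
      apply Rmult_le_reg_r with y0. lra.
      replace ((A * H + m) / y0 * y0) with (A * H + m) by (field; lra).
      replace (2 * (A * H + m) / - c) with (2 * (A * H + m) * / - c) in Hy0b by reflexivity.
      assert (2 * (A * H + m) = 2 * (A * H + m) * / - c * (- c)) by (field; lra).
      nra. }
    assert (0 <= ln ((1 + y0) / y0)).
    { rewrite <- ln_1. apply ln_le. lra.
      apply Rmult_le_reg_r with y0. lra. unfold Rdiv. rewrite Rmult_assoc, Rinv_l by lra. lra. }
    nra. }
  destruct (Ranalysis5.IVT_interv (fun D => - G A B H c m D) x0 y0) as [z [Hz Gz]].
  - intros a Ha. apply G_cont; lra.
  - lra.
  - lra.
  - lra.
  - exists z. split. split. lra. lra.
    intros w [Hw Gw].
    destruct (Rtotal_order z w) as [Hzw|[Hzw|Hzw]].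
    + assert (G A B H c m w < G A B H c m z) by (apply G_decr; lra). lra.
    + exact Hzw.
    + assert (G A B H c m z < G A B H c m w) by (apply G_decr; lra). lra.
Qed.

Lemma lemma2_lt (N : nat) (h g : R) (i j : nat) :
  0 < h -> 0 < g -> (i < j)%nat -> (j <= N)%nat ->
  exists! D : R, 0 < D /\ Rk N h g i D = Rk N h g j D.
Proof.
  intros Hh Hg Hij HjN.
  assert (Hl2 : 0 < ln 2) by (generalize ln_lt_2; lra).
  set (c := ln (1 + INR i * g ^ 2) - ln (1 + INR j * g ^ 2)).
  set (m := INR j - INR i).
  assert (HiR : INR i + 1 <= INR j) by (rewrite <- S_INR; apply le_INR; lia).
  assert (Hi0 : 0 <= INR i) by apply pos_INR.
  assert (Hg2 : 0 < g ^ 2) by (apply pow_lt; lra).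
  assert (Hc : c < 0).
  { unfold c. assert (ln (1 + INR i * g ^ 2) < ln (1 + INR j * g ^ 2)).
    apply ln_increasing; nra. lra. }
  assert (HB : 0 <= INR (N - j)) by apply pos_INR.
  assert (HAB : INR (N - j) <= INR (N - i)) by (apply le_INR; lia).
  assert (Hh2 : 0 < h ^ 2) by (apply pow_lt; lra).
  destruct (G_unique (INR (N - i)) (INR (N - j)) (h ^ 2) c m HB HAB Hh2 ltac:(unfold m; lra) Hc)
    as [z [[Hz Gz] Hu]].
  assert (Heq : forall D, Rk N h g i D - Rk N h g j D = G (INR (N - i)) (INR (N - j)) (h ^ 2) c m D / ln 2).
  { intro D. unfold Rk, G, log2, c, m. field. lra. }
  exists z. split.
  - split. exact Hz. generalize (Heq z). rewrite Gz. unfold Rdiv. rewrite Rmult_0_l. lra.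
  - intros w [Hw Ew]. apply Hu. split. exact Hw.
    generalize (Heq w). rewrite Ew, Rminus_diag. intro E.
    apply Rmult_eq_reg_r with (/ ln 2). rewrite Rmult_0_l. exact (eq_sym E).
    apply Rinv_neq_0_compat. lra.
Qed.

Theorem lemma2 (N : nat) (h g : R) (i j : nat) :
  (1 <= N)%nat -> 0 < h -> 0 < g ->
  (i <= N)%nat -> (j <= N)%nat -> i <> j ->
  exists! D : R, 0 < D /\ Rk N h g i D = Rk N h g j D.
Proof.
  intros _ Hh Hg HiN HjN Hij.
  destruct (Nat.lt_gt_cases i j) as [[Hlt|Hlt] _].
  - exact Hij.
  - apply lemma2_lt; assumption.
  - destruct (lemma2_lt N h g j i Hh Hg Hlt HiN) as [z [[Hz E] U]].
    exists z. split. split. exact Hz. symmetry. exact E.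
    intros w [Hw Ew]. apply U. split. exact Hw. symmetry. exact Ew.
Qed.
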